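(* Let $\Lambda=T_1\sqcup\cdots\sqcup T_m$ be a partition of $\Lambda$ into pairwise disjoint tilings $T_1,\dots,T_m$. Then for every $S\subseteq\{1,\dots,m\}$, the set $T_S=\bigcup_{s\in S}T_s$ is a tiling.
   Context: Fix an integer $n\ge 3$ and write $[n]=\{1,\dots,n\}$. Let $\Lambda$ be the set of 3-element subsets of $[n]$; a triple $\{i,j,k\}$ with $i<j<k$ is written $ijk$. For a 4-element subset $F=\{i<j<k<l\}$ of $[n]$, the stick of $F$ is the sequence $(ijk,\ ijl,\ ikl,\ jkl)$. A tiling (the inversion set of a rhombus tiling of the zonogon $Z(n;2)$) is a subset $T\subseteq\Lambda$ such that for every 4-element $F\subseteq[n]$, $T\cap\mathrm{stick}(F)$ is an initial segment or a final segment of the stick (empty set and whole stick allowed). *)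

(* Defs.v *)
From mathcomp Require Import all_boot.
Set Implicit Arguments. Unset Strict Implicit. Unset Printing Implicit Defensive.

(* [n] is modelled by 'I_n (element i of 'I_n stands for i+1). *)

Definition Lambda (n : nat) : {set {set 'I_n}} := [set A : {set 'I_n} | #|A| == 3].

Definition stick (n : nat) (i j k l : 'I_n) : seq {set 'I_n} :=
  [:: [set i; j; k]; [set i; j; l]; [set i; k; l]; [set j; k; l]].

Definition is_initial_segment (T : finType) (X : {set T}) (s : seq T) : Prop :=
  exists a : nat, X = [set x in take a s].

Definition is_final_segment (T : finType) (X : {set T}) (s : seq T) : Prop :=
  exists a : nat, X = [set x in drop a s].

Definition tiling (n : nat) (T : {set {set 'I_n}}) : Prop :=
  T \subset Lambda n /\
  forall i j k l : 'I_n, i < j -> j < k -> k < l ->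
    let st := stick i j k l in
    is_initial_segment (T :&: [set x in st]) st \/
    is_final_segment (T :&: [set x in st]) st.

(* Main.v *)
Require Import Defs.
From mathcomp Require Import all_boot.

Definition mono (b0 b1 b2 b3 : bool) :=
  [&& b1 ==> b0, b2 ==> b1 & b3 ==> b2] || [&& b0 ==> b1, b1 ==> b2 & b2 ==> b3].


Ltac kill_neq := repeat match goal with H : is_true (?a != ?b) |- _ =>
  rewrite ?(eq_sym b a) ?(negbTE H); clear H end.

Lemma key (A : eqType) (x0 x1 x2 x3 : A) (P : pred A) :
  (forall s, mono (x0 == s) (x1 == s) (x2 == s) (x3 == s)) ->
  mono (P x0) (P x1) (P x2) (P x3).
Proof.
move=> H; move: (H x0) (H x1) (H x2) (H x3); clear H.
case: (eqVneq x0 x1) => [e|?]; try (rewrite ?e; clear e); case: (eqVneq x0 x2) => [e|?]; try (rewrite ?e; clear e);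
case: (eqVneq x0 x3) => [e|?]; try (rewrite ?e; clear e); case: (eqVneq x1 x2) => [e|?]; try (rewrite ?e; clear e);
case: (eqVneq x1 x3) => [e|?]; try (rewrite ?e; clear e); case: (eqVneq x2 x3) => [e|?]; try (rewrite ?e; clear e);
rewrite ?eqxx; kill_neq;
by case: (P x0); case: (P x1); case: (P x2); case: (P x3).
Qed.
Ltac solve_h := match goal with
  E0 : (?a0 \in ?X) = _, E1 : (?a1 \in ?X) = _, E2 : (?a2 \in ?X) = _, E3 : (?a3 \in ?X) = _ |- _ =>
  move=> x; rewrite !inE => /or4P [] /eqP ->; rewrite ?E0 ?E1 ?E2 ?E3 /= ?inE ?eqxx; kill_neq; by [] end.

Lemma seg_iff {T : finType} {a0 a1 a2 a3 : T} (X : {set T}) :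
  a0 != a1 -> a0 != a2 -> a0 != a3 -> a1 != a2 -> a1 != a3 -> a2 != a3 ->
  let st := [:: a0; a1; a2; a3] in
  (is_initial_segment (X :&: [set x in st]) st \/
   is_final_segment (X :&: [set x in st]) st) <->
  mono (a0 \in X) (a1 \in X) (a2 \in X) (a3 \in X).
Proof.
move=> n01 n02 n03 n12 n13 n23 /=.
have mX : forall x, x \in [:: a0; a1; a2; a3] ->
   (x \in X :&: [set x in [:: a0; a1; a2; a3]]) = (x \in X).
  by move=> x hx; rewrite in_setI in_set hx andbT.
have h0 : a0 \in [:: a0; a1; a2; a3] by rewrite !inE eqxx.
have h1 : a1 \in [:: a0; a1; a2; a3] by rewrite !inE eqxx ?orbT.
have h2 : a2 \in [:: a0; a1; a2; a3] by rewrite !inE eqxx ?orbT.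
have h3 : a3 \in [:: a0; a1; a2; a3] by rewrite !inE eqxx ?orbT.
split.
- have E : forall Y : {set T}, X :&: [set x in [:: a0; a1; a2; a3]] = Y ->
     forall x, x \in [:: a0; a1; a2; a3] -> (x \in X) = (x \in Y).
    by move=> Y <- x hx; rewrite mX.
  case=> [] [a /E e].
  + rewrite (e _ h0) (e _ h1) (e _ h2) (e _ h3).
    clear e; case: a => [|[|[|[|a]]]] /=; rewrite ?inE ?eqxx; kill_neq; by [].
  + rewrite (e _ h0) (e _ h1) (e _ h2) (e _ h3).
    clear e; case: a => [|[|[|[|a]]]] /=; rewrite ?inE ?eqxx; kill_neq; by [].
- have E : forall a : nat, forall S : {set T},
     (forall x, x \in [:: a0; a1; a2; a3] -> (x \in X) = (x \in S)) ->
     S \subset [set x in [:: a0; a1; a2; a3]] ->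
     exists a : nat, X :&: [set x in [:: a0; a1; a2; a3]] = S.
    move=> _ S h hS; exists 0; apply/setP => x.
    case: (boolP (x \in [:: a0; a1; a2; a3])) => hx.
      by rewrite mX // h.
    rewrite in_setI in_set (negbTE hx) andbF; apply/esym/negP => xS; case/negP: hx.
    by have := subsetP hS x xS; rewrite inE.
  move=> hm.
  have F : forall a, (forall x, x \in [:: a0; a1; a2; a3] ->
      (x \in X) = (x \in take a [:: a0; a1; a2; a3])) ->
      is_initial_segment (X :&: [set x in [:: a0; a1; a2; a3]]) [:: a0; a1; a2; a3].
    move=> a h; rewrite /is_initial_segment.
    have k1 : forall x, x \in [:: a0; a1; a2; a3] ->
       (x \in X) = (x \in [set x in take a [:: a0; a1; a2; a3]]).
      by move=> x hx; rewrite h // in_set.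
    have k2 : [set x in take a [:: a0; a1; a2; a3]] \subset [set x in [:: a0; a1; a2; a3]].
      by apply/subsetP => x; rewrite !in_set; exact: mem_take.
    by case: (E 0 _ k1 k2) => _ ->; exists a.
  have G : forall a, (forall x, x \in [:: a0; a1; a2; a3] ->
      (x \in X) = (x \in drop a [:: a0; a1; a2; a3])) ->
      is_final_segment (X :&: [set x in [:: a0; a1; a2; a3]]) [:: a0; a1; a2; a3].
    move=> a h; rewrite /is_final_segment.
    have k1 : forall x, x \in [:: a0; a1; a2; a3] ->
       (x \in X) = (x \in [set x in drop a [:: a0; a1; a2; a3]]).
      by move=> x hx; rewrite h // in_set.
    have k2 : [set x in drop a [:: a0; a1; a2; a3]] \subset [set x in [:: a0; a1; a2; a3]].
      by apply/subsetP => x; rewrite !in_set; exact: mem_drop.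
    by case: (E 0 _ k1 k2) => _ ->; exists a.
  move: hm.
  case E0: (a0 \in X); case E1: (a1 \in X); case E2: (a2 \in X); case E3: (a3 \in X);
  rewrite /mono //= => _;
  first [ left; apply: (F 0); solve_h | left; apply: (F 1); solve_h
        | left; apply: (F 2); solve_h | left; apply: (F 3); solve_h
        | left; apply: (F 4); solve_h | right; apply: (G 1); solve_h
        | right; apply: (G 2); solve_h | right; apply: (G 3); solve_h ].
Qed.

Theorem lemma2 (n m : nat) (T : 'I_m -> {set {set 'I_n}}) :
  3 <= n ->
  (forall s, tiling (T s)) ->
  (forall s t, s != t -> [disjoint T s & T t]) ->
  \bigcup_(s < m) T s = Lambda n ->
  forall S : {set 'I_m}, tiling (\bigcup_(s in S) T s).
Proof.
move=> n3 hT hdisj hcov S; split.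
  apply/subsetP => A /bigcupP [s _ hA]; rewrite -hcov; apply/bigcupP; exists s => //.
move=> i j k l hij hjk hkl /=; rewrite /stick.
have hik : i < k by apply: ltn_trans hjk.
have hjl : j < l by apply: ltn_trans hkl.
have hil : i < l by apply: ltn_trans hjl.
have fij : (i == j) = false by rewrite -val_eqE /= ltn_eqF.
have fji : (j == i) = false by rewrite -val_eqE /= gtn_eqF.
have fik : (i == k) = false by rewrite -val_eqE /= ltn_eqF.
have fki : (k == i) = false by rewrite -val_eqE /= gtn_eqF.
have fil : (i == l) = false by rewrite -val_eqE /= ltn_eqF.
have fli : (l == i) = false by rewrite -val_eqE /= gtn_eqF.
have fjk : (j == k) = false by rewrite -val_eqE /= ltn_eqF.
have fkj : (k == j) = false by rewrite -val_eqE /= gtn_eqF.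
have fjl : (j == l) = false by rewrite -val_eqE /= ltn_eqF.
have flj : (l == j) = false by rewrite -val_eqE /= gtn_eqF.
have fkl : (k == l) = false by rewrite -val_eqE /= ltn_eqF.
have flk : (l == k) = false by rewrite -val_eqE /= gtn_eqF.
have n01 : [set i; j; k] != [set i; j; l].
  by apply/eqP => /setP /(_ l); rewrite !inE eqxx fli flj flk.
have n02 : [set i; j; k] != [set i; k; l].
  by apply/eqP => /setP /(_ l); rewrite !inE eqxx fli flj flk.
have n03 : [set i; j; k] != [set j; k; l].
  by apply/eqP => /setP /(_ l); rewrite !inE eqxx fli flj flk.
have n12 : [set i; j; l] != [set i; k; l].
  by apply/eqP => /setP /(_ k); rewrite !inE eqxx fki fkj fkl.
have n13 : [set i; j; l] != [set j; k; l].
  by apply/eqP => /setP /(_ k); rewrite !inE eqxx fki fkj fkl.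
have n23 : [set i; k; l] != [set j; k; l].
  by apply/eqP => /setP /(_ j); rewrite !inE eqxx fji fjk fjl.
have cov : forall a b c : 'I_n, (a == b) = false -> (a == c) = false -> (b == c) = false ->
    exists s0, [set a; b; c] \in T s0.
  move=> a b c fab fac fbc.
  have : [set a; b; c] \in Lambda n.
    rewrite inE (_ : [set a; b; c] = a |: [set b; c]) ?cardsU1 ?cards1 ?inE ?fab ?fac ?fbc //.
    by apply/setP => x; rewrite !inE ?orbA.
  by rewrite -hcov => /bigcupP [s0 _ h]; exists s0.
have U : forall a s0, a \in T s0 -> forall s, (a \in T s) = (s0 == s).
  move=> a s0 h s; case: (eqVneq s0 s) => [<-//|ne]; exact: (disjointFr (hdisj _ _ ne) h).
have V : forall a s0, a \in T s0 -> (a \in \bigcup_(s in S) T s) = (s0 \in S).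
  move=> a s0 h; apply/bigcupP/idP => [[s sS h']|h0]; last by exists s0.
  by rewrite (U _ _ h s) in h'; move/eqP: h' => ->.
have [s0 h0] := cov i j k fij fik fjk.
have [s1 h1] := cov i j l fij fil fjl.
have [s2 h2] := cov i k l fik fil fkl.
have [s3 h3] := cov j k l fjk fjl fkl.
have [_ Hsi] := seg_iff (\bigcup_(s in S) T s) n01 n02 n03 n12 n13 n23; apply: Hsi.
rewrite (V _ _ h0) (V _ _ h1) (V _ _ h2) (V _ _ h3).
apply: key => s.
have := (hT s).2 i j k l hij hjk hkl; rewrite /= /stick.
move/(seg_iff (T s) n01 n02 n03 n12 n13 n23).
by rewrite (U _ _ h0) (U _ _ h1) (U _ _ h2) (U _ _ h3).
Qed.
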